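(* Let $T=(V,E)$ be a tree with a proper 2-coloring $\chi$, and let $T_\mathcal{B}$, $T_\mathcal{R}$ be its blue and red interior graphs. Then $\mathcal{S}(T)=\mathcal{S}_{even}(T_\mathcal{B})*\mathcal{S}_{even}(T_\mathcal{R})$.
   Context: $N(v)=\{u:uv\in E\}$, $N(D)=\bigcup_{v\in D}N(v)$, $N[U]=N(U)\cup U$. A TD-set of a graph is $D$ with $N(D)=V$, minimal if no proper subset is a TD-set. The stable complex $\mathcal{S}(G)$ is the simplicial complex on $V(G)$ whose facets are $V(G)\setminus D$ for $D$ a minimal TD-set. A leaf is a vertex of degree 1, a support vertex is a vertex adjacent to a leaf; the height of a vertex in a graph is its minimum distance to a leaf of that graph (isolated vertices have height 0); $V_k$ is the set of height-$k$ vertices, $V_{even}$, $V_{odd}$ the sets of vertices of even/odd height. $T_\mathcal{B}$ is the subgraph induced on $V\setminus N[V_1(T)\cap\chi^{-1}(\mathcal{B})]$, $T_\mathcal{R}$ that induced on $V\setminus N[V_1(T)\cap\chi^{-1}(\mathcal{R})]$; their components are balanced trees (no two adjacent vertices of equal height), heights computed in these forests. For such a forest $F$, an odd-TD-set is $D\subseteq V(F)$ with $N_F(D)\supseteq V_{odd}(F)$, minimal if no proper subset is one; the even-stable complex $\mathcal{S}_{even}(F)$ is the simplicial complex on $V_{even}(F)$ whose facets are $V_{even}(F)\setminus D$ for $D$ a minimal odd-TD-set. For complexes $\Delta',\Delta''$ on disjoint vertex sets, the join is $\Delta'*\Delta''=\{F'\cup F'': F'\in\Delta', F''\in\Delta''\}$.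 *)

(* Defs.v *)
From mathcomp Require Import all_boot.
Set Implicit Arguments. Unset Strict Implicit. Unset Printing Implicit Defensive.

(* A simple graph on a finite type V is a symmetric irreflexive relation e.
   Induced subgraphs are described by their vertex set S : {set V}. *)
Section Graphs.
Variables (V : finType) (e : rel V).

Definition nbr (S : {set V}) (v : V) : {set V} := [set u in S | e v u].
Definition nbrs (S : {set V}) (D : {set V}) : {set V} :=
  \bigcup_(v in D) nbr S v.
Definition cnbrs (S : {set V}) (U : {set V}) : {set V} := nbrs S U :|: U.

Definition leafb (S : {set V}) (v : V) : bool := (v \in S) && (#|nbr S v| == 1).
Definition isolatedb (S : {set V}) (v : V) : bool := (v \in S) && (nbr S v == set0).

Fixpoint ball (S : {set V}) (v : V) (k : nat) : {set V} :=
  match k with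
  | 0 => [set v]
  | k'.+1 => cnbrs S (ball S v k')
  end.

(* v has height k in the induced subgraph on S: minimum distance to a leaf
   is k, or v is isolated and k = 0 *)
Definition has_height (S : {set V}) (v : V) (k : nat) : bool :=
  (v \in S) &&
  ((isolatedb S v && (k == 0)) ||
   ([exists u in ball S v k, leafb S u] &&
    ((k == 0) || ~~ [exists u in ball S v k.-1, leafb S u]))).

(* heights never exceed #|V| - 1, so quantifying over 'I_#|V|.+1 is exhaustive *)
Definition Vk (S : {set V}) (k : nat) : {set V} := [set v in S | has_height S v k].
Definition Veven (S : {set V}) : {set V} :=
  [set v in S | [exists k : 'I_#|V|.+1, ~~ odd k && has_height S v k]].
Definition Vodd (S : {set V}) : {set V} :=
  [set v in S | [exists k : 'I_#|V|.+1, odd k && has_height S v k]].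

Definition TDset (D : {set V}) : bool := nbrs setT D == setT.

Definition oddTDset (S : {set V}) (D : {set V}) : bool :=
  (D \subset S) && (Vodd S \subset nbrs S D).

(* simplicial complexes represented by their set of faces *)
Definition stable_complex : {set {set V}} :=
  [set F : {set V} | [exists D : {set V}, minset TDset D && (F \subset ~: D)]].

Definition even_stable_complex (S : {set V}) : {set {set V}} :=
  [set F : {set V} | [exists D : {set V}, minset (oddTDset S) D && (F \subset Veven S :\: D)]].

Definition join (A B : {set {set V}}) : {set {set V}} :=
  [set F :|: G | F in A, G in B].

(* blue = true, red = false *)
Definition interior (chi : V -> bool) (c : bool) : {set V} :=
  ~: cnbrs setT (Vk setT 1 :&: [set v | chi v == c]).

Definition is_tree : Prop :=
  (forall x y, connect e x y) /\
  ~ (exists s : seq V, [/\ uniq s, 3 <= size s & cycle e s]).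

Definition proper2coloring (chi : V -> bool) : Prop :=
  forall u v, e u v -> chi u != chi v.

End Graphs.

(* Main.v *)
Require Import Defs.
From mathcomp Require Import all_boot zify.
Set Implicit Arguments. Unset Strict Implicit. Unset Printing Implicit Defensive.

Record hyps (V : finType) (e : rel V) (chi : V -> bool) : Prop := Hyps {
  hsym : symmetric e; hirr : irreflexive e; htree : is_tree e;
  hcard : 3 <= #|V|; hcol : proper2coloring e chi }.

Lemma in_nbr (V : finType) (e : rel V) (S : {set V}) v u : (u \in nbr e S v) = (u \in S) && e v u.
Proof. by rewrite inE. Qed.

Lemma in_nbrs (V : finType) (e : rel V) (S D : {set V}) u :
  reflect (exists2 v, v \in D & (u \in S) && e v u) (u \in nbrs e S D).
Proof.
apply: (iffP bigcupP) => [[v vD]|[v vD]].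
  by rewrite in_nbr => H; exists v.
by move=> H; exists v => //; rewrite in_nbr.
Qed.

Lemma colE (V : finType) (e : rel V) chi (H : hyps e chi) u v : e u v -> chi v = ~~ chi u.
Proof. by move=> /(hcol H); case: (chi u); case: (chi v). Qed.

Lemma closed_conn (V : finType) (e : rel V) (A : {set V}) x y :
  (forall a b, a \in A -> e a b -> b \in A) -> x \in A -> connect e x y -> y \in A.
Proof.
move=> cl xA /connectP[p]; elim: p x xA => [|z p IH] x xA /=; first by move=> _ ->.
by case/andP=> exz pz; apply: IH pz; apply: cl xA exz.
Qed.

Lemma small_closed (V : finType) (e : rel V) chi (H : hyps e chi) (A : {set V}) :
  #|A| <= 2 -> (forall a b, a \in A -> e a b -> b \in A) -> A != set0 -> False.
Proof.
move=> cA cl /set0Pn[x xA].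
have: #|A| < #|V| by apply: leq_ltn_trans cA (hcard H).
rewrite -(cardsC A) -{1}(addn0 #|A|) ltn_add2l => /card_gt0P[y]; rewrite inE => yA.
case: (htree H) => conn _.
by move: yA; rewrite (closed_conn cl xA (conn x y)).
Qed.

Lemma ballS (V : finType) (e : rel V) (S : {set V}) v k u :
  (u \in ball e S v k.+1) = (u \in nbrs e S (ball e S v k)) || (u \in ball e S v k).
Proof. by rewrite /= /cnbrs in_setU. Qed.

Lemma ball_mono (V : finType) (e : rel V) (S : {set V}) v k m u :
  k <= m -> u \in ball e S v k -> u \in ball e S v m.
Proof.
move=> /subnKC <-; elim: (m - k) => [|n IH]; first by rewrite addn0.
by move=> /IH; rewrite addnS ballS => ->; rewrite orbT.
Qed.

Lemma ball_step (V : finType) (e : rel V) (S : {set V}) v k u w :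
  u \in ball e S v k -> w \in S -> e u w -> w \in ball e S v k.+1.
Proof. by move=> ub wS euw; rewrite ballS; apply/orP; left; apply/in_nbrs; exists u => //; rewrite wS. Qed.

Lemma ball_parity (V : finType) (e : rel V) chi (H : hyps e chi) (S : {set V}) v k u :
  u \in ball e S v k -> (k == 0) || (u \notin ball e S v k.-1) -> chi u = odd k (+) chi v.
Proof.
elim: k u => [|k IH] u.
  by rewrite /= inE => /eqP -> _.
rewrite ballS /= => /orP[|ub]; last by rewrite ub.
case/in_nbrs => w wb /andP[uS ewu] nub.
rewrite (colE H ewu).
case: k IH wb nub => [|k] IH wb nub.
  by move: wb; rewrite /= inE => /eqP ->; case: (chi v).
rewrite (IH w wb) /=; first by case: (odd k); case: (chi v).
apply/negP => wb'; move: nub; rewrite ballS.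
by rewrite (_ : u \in nbrs e S (ball e S v k) = true) //; apply/in_nbrs; exists w => //; rewrite uS.
Qed.

Definition col (V : finType) (chi : V -> bool) c := [set v | chi v == c].
Definition Sup (V : finType) (e : rel V) chi c := Vk e setT 1 :&: col chi c.

Lemma in_int (V : finType) (e : rel V) chi c v :
  (v \in interior e chi c) = (v \notin Sup e chi c) && ~~ (v \in nbrs e setT (Sup e chi c)).
Proof. by rewrite /interior /cnbrs !inE orbC negb_or. Qed.

Lemma in_Sup (V : finType) (e : rel V) chi c w :
  (w \in Sup e chi c) = has_height e setT w 1 && (chi w == c).
Proof. by rewrite /Sup /Vk !inE. Qed.

Lemma Sup_leaf (V : finType) (e : rel V) chi (H : hyps e chi) c s :
  s \in Sup e chi c -> chi s = c /\ exists l, e s l /\ forall w, e l w -> w = s.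
Proof.
rewrite in_Sup /has_height inE /= => /andP[/orP[/andP[_ //]|/andP[/existsP[l /andP[lb ll]]]]].
rewrite /= => nl /eqP cs; split => //.
have ls : l != s.
  by apply: contraNneq nl => els; apply/existsP; exists s; rewrite inE eqxx -els.
move: lb; rewrite /cnbrs in_setU in_set1 (negbTE ls) orbF => /in_nbrs[s'].
rewrite inE => /eqP ->; rewrite inE /= => esl.
exists l; split => // w elw.
move: ll; rewrite /leafb inE /= => /cards1P[x hx].
have : s \in nbr e setT l by rewrite in_nbr inE (hsym H).
have : w \in nbr e setT l by rewrite in_nbr inE.
by rewrite hx !inE => /eqP -> /eqP ->.
Qed.

Lemma Sup_intro (V : finType) (e : rel V) chi c w u :
  chi w = c -> e w u -> leafb e setT u -> ~~ leafb e setT w -> w \in Sup e chi c.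
Proof.
move=> cw ewu lu nlw; rewrite in_Sup cw eqxx andbT /has_height inE /=.
apply/orP; right; apply/andP; split.
  apply/existsP; exists u; rewrite lu andbT /cnbrs inE; apply/orP; left.
  by apply/in_nbrs; exists w; rewrite ?inE ?eqxx.
apply/existsP => -[x]; rewrite inE => /andP[/eqP -> ]; by apply/negP.
Qed.

Lemma src_out (V : finType) (e : rel V) chi (H : hyps e chi) c v :
  chi v = c -> v \notin interior e chi c -> v \in Sup e chi c.
Proof.
move=> cv; rewrite in_int negb_and !negbK => /orP[//|/in_nbrs[s sS /andP[_ esv]]].
move: sS; rewrite in_Sup => /andP[_ /eqP cs].
by move: cv; rewrite (colE H esv) cs; case: (c).
Qed.

Lemma tg_in (V : finType) (e : rel V) chi (H : hyps e chi) c u w :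
  chi u = ~~ c -> u \in interior e chi c -> e u w -> w \in interior e chi c.
Proof.
move=> cu; rewrite !in_int => /andP[_ nu] euw; apply/andP; split.
  apply: contra nu => wS; apply/in_nbrs; exists w => //; by rewrite inE (hsym H).
apply/negP => /in_nbrs[s sS /andP[_ esw]].
move: sS; rewrite in_Sup => /andP[_ /eqP cs].
have := colE H esw; have := colE H euw; rewrite cu cs.
by case: (c); case: (chi w).
Qed.

Lemma leaf_color (V : finType) (e : rel V) chi (H : hyps e chi) c u :
  u \in interior e chi c -> #|nbr e (interior e chi c) u| <= 1 -> chi u = c.
Proof.
move=> uI cd; case: (boolP (chi u == c)) => [/eqP //|ncu]; exfalso.
have cu : chi u = ~~ c by move: ncu; case: (chi u); case: (c).
have eqN : nbr e (interior e chi c) u = nbr e setT u.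
  by apply/setP => w; rewrite !in_nbr in_setT; case euw: (e u w); rewrite ?andbF ?andbT // (tg_in H cu uI euw).
rewrite eqN in cd.
move: cd; rewrite leq_eqVlt ltnS leqn0 => /orP[/cards1P[w hw]|/eqP/cards0_eq h0].
  have euw : e u w.
    have : w \in nbr e setT u by rewrite hw inE.
    by rewrite in_nbr in_setT.
  have cw : chi w = c by rewrite (colE H euw) cu; case: (c).
  case: (boolP (leafb e setT w)) => lw.
    have hw' : nbr e setT w = [set u].
      move: lw; rewrite /leafb inE /= => /cards1P[x hx].
      have : u \in nbr e setT w by rewrite in_nbr inE (hsym H).
      by rewrite hx inE => /eqP ->.
    apply: (@small_closed V e chi H [set u; w]); first by rewrite cards2; case: (u != w).
      move=> a b; rewrite !inE => /orP[]/eqP -> eab.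
        have : b \in nbr e setT u by rewrite in_nbr inE.
        by rewrite hw inE => ->; rewrite orbT.
      have : b \in nbr e setT w by rewrite in_nbr inE.
      by rewrite hw' inE => ->.
    by apply/set0Pn; exists u; rewrite !inE eqxx.
  have lu : leafb e setT u by rewrite /leafb in_setT hw cards1.
  have ewu : e w u by rewrite (hsym H).
  have wS := Sup_intro cw ewu lu lw.
  by move: uI; rewrite in_int => /andP[_ /negP]; apply; apply/in_nbrs; exists w => //; rewrite in_setT ewu.
apply: (@small_closed V e chi H [set u]); first by rewrite cards1.
  move=> a b; rewrite inE => /eqP -> eab.
  have : b \in nbr e setT u by rewrite in_nbr in_setT.
  by rewrite h0 in_set0.
by apply/set0Pn; exists u; rewrite inE.
Qed.

Lemma height_parity (V : finType) (e : rel V) chi (H : hyps e chi) c v k :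
  has_height e (interior e chi c) v k -> chi v = odd k (+) c.
Proof.
rewrite /has_height => /andP[vS /orP[/andP[/andP[_ /eqP n0] /eqP k0]|/andP[/existsP[u /andP[ub ul]] hk]]].
  by rewrite k0 (leaf_color H vS) ?n0 ?cards0.
move: (ul); rewrite /leafb => /andP[uS /eqP u1].
have cu := leaf_color H uS (eq_leq u1).
have := ball_parity H ub; rewrite cu => h.
have -> : chi v = odd k (+) (odd k (+) chi v) by case: (odd k); case: (chi v).
rewrite -h //.
case/orP: hk => [->//|nb]; apply/orP; right; apply: contra nb => ub'.
by apply/existsP; exists u; rewrite ub'.
Qed.

Definition Rin (V : finType) (e : rel V) (S : {set V}) := [rel a b | e a b && (b \in S)].

Lemma walk_ball (V : finType) (e : rel V) (S : {set V}) v q :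
  path (Rin e S) v q -> last v q \in ball e S v (size q).
Proof.
elim/last_ind: q => [|q x IH]; first by rewrite /= inE.
rewrite rcons_path last_rcons size_rcons => /andP[pq /andP[ex xS]].
exact: ball_step (IH pq) xS ex.
Qed.

Lemma path_inS (V : finType) (e : rel V) (S : {set V}) v q :
  v \in S -> path (Rin e S) v q -> {subset v :: q <= S}.
Proof.
elim: q v => [|y q IH] v vS /=.
  by move=> _ x; rewrite inE => /eqP ->.
case/andP=> /andP[_ yS] pq x; rewrite inE => /orP[/eqP -> //|]; exact: IH.
Qed.

Lemma sorted_suffix (V : finType) (e : rel V) w1 z t :
  sorted e (w1 ++ z :: t) -> path e z t.
Proof.
case: w1 => [//|a w1] /=; rewrite cat_path => /andP[_] /=; by case/andP.
Qed.

Lemma leaf_walk_aux (V : finType) (e : rel V) chi (H : hyps e chi) (S : {set V}) v n :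
  forall p, #|V| - size p <= n -> p != [::] -> uniq (v :: p) -> path (Rin e S) v p ->
  v \in S -> exists q, [/\ path (Rin e S) v q, uniq (v :: q) & leafb e S (last v q)].
Proof.
elim: n => [|n IH] p hn pn up pp vS.
  move/card_uniqP: up; have := max_card (mem (v :: p)) => /= h1 h2.
  by move: hn; rewrite leqn0 subn_eq0 => h3; move: (leq_trans h1 h3); rewrite h2 ltnn.
have pS := path_inS vS pp.
case: (boolP (leafb e S (last v p))) => [lf|nlf]; first by exists p.
move: pn up pp pS nlf; case/lastP: p hn => [//|p' y] hn _ up pp pS nlf.
rewrite last_rcons in nlf.
set x := last v p'.
have yS : y \in S by apply: pS; rewrite inE mem_rcons inE eqxx orbT.
have xS : x \in S by apply: pS; rewrite -cats1 -cat_cons mem_cat mem_last.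
move: (pp); rewrite rcons_path => /andP[pp' /andP[exy _]].
have xn : x \in nbr e S y by rewrite in_nbr xS (hsym H).
have : 0 < #|nbr e S y :\ x|.
  move: nlf; rewrite /leafb yS (cardsD1 x) xn /= add1n eqSS.
  by rewrite lt0n.
case/card_gt0P => z; rewrite !inE => /and3P[zx zS eyz].
case: (boolP (z \in v :: rcons p' y)) => zin; last first.
  have h1 : #|V| - size (rcons (rcons p' y) z) <= n.
    by move: hn; rewrite !size_rcons; lia.
  have h2 : rcons (rcons p' y) z != [::] by case: (rcons p' y).
  have h3 : uniq (v :: rcons (rcons p' y) z) by rewrite -rcons_cons rcons_uniq zin up.
  have h4 : path (Rin e S) v (rcons (rcons p' y) z).
    by rewrite rcons_path pp /= last_rcons eyz zS.
  exact: (IH _ h1 h2 h3 h4 vS).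
exfalso.
have zy : z != y by apply: contraTneq eyz => ->; rewrite (hirr H).
have zin' : z \in v :: p'.
  by move: zin; rewrite -rcons_cons mem_rcons inE (negbTE zy).
have [w1 [w2 eqw]] : exists w1 w2, v :: p' = w1 ++ z :: w2.
  by case/splitPr: zin' => w1 w2; exists w1, w2.
case: (htree H) => _; apply; exists (z :: rcons w2 y).
have eqall : v :: rcons p' y = w1 ++ z :: rcons w2 y.
  by rewrite -rcons_cons eqw rcons_cat.
split.
- by move: up; rewrite eqall cat_uniq => /and3P[].
- case: w2 eqw eqall => [|a w2] eqw eqall; last by rewrite /= size_rcons.
  exfalso; move: zx; rewrite /x.
  have -> : last v p' = last v (v :: p') by [].
  by rewrite eqw cats1 last_rcons eqxx.
- rewrite /cycle rcons_path last_rcons eyz andbT.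
  have : sorted e (v :: rcons p' y).
    by rewrite /=; apply: sub_path pp => a b /andP[].
  by rewrite eqall => /sorted_suffix.
Qed.

Lemma height_exists (V : finType) (e : rel V) chi (H : hyps e chi) (S : {set V}) v :
  v \in S -> exists2 k, k < #|V|.+1 & has_height e S v k.
Proof.
move=> vS; case: (boolP (isolatedb e S v)) => iso.
  by exists 0 => //; rewrite /has_height vS iso.
have : exists w, w \in nbr e S v.
  by apply/set0Pn; move: iso; rewrite /isolatedb vS.
case=> w; rewrite in_nbr => /andP[wS evw].
have [|||||q [pq uq lq]] := @leaf_walk_aux V e chi H S v #|V| [:: w].
- by rewrite leq_subr.
- by [].
- by rewrite /= inE andbT; apply: contraTneq evw => ->; rewrite (hirr H).
- by rewrite /= evw wS.
- exact: vS.
have szq : size q < #|V|.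
  by move/card_uniqP: uq => /= <-; apply: max_card.
pose P k := [exists u in ball e S v k, leafb e S u].
have Psz : P (size q) by apply/existsP; exists (last v q); rewrite lq walk_ball.
have Pq : exists k, P k by exists (size q).
case: (ex_minnP Pq) => k0 Pk0 mink0.
exists k0; first by have := mink0 _ Psz; move: szq; lia.
rewrite /has_height vS /=; apply/orP; right; apply/andP; split; first exact: Pk0.
case: k0 Pk0 mink0 => [//|k0] _ mink0 /=.
apply/negP => Pk; have := mink0 _ Pk; by rewrite ltnn.
Qed.

Lemma Vpar (V : finType) (e : rel V) chi (H : hyps e chi) c v (b : bool) :
  (v \in [set v in interior e chi c |
          [exists k : 'I_#|V|.+1, (odd k == b) && has_height e (interior e chi c) v k]])
  = (v \in interior e chi c) && (chi v == b (+) c).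
Proof.
rewrite inE; case vS: (v \in interior e chi c) => //=.
apply/existsP/eqP => [[k /andP[/eqP ok hk]]|cv].
  by rewrite (height_parity H hk) ok.
have [k kl hk] := height_exists H vS.
exists (Ordinal kl); rewrite /= hk andbT.
by move: cv; rewrite (height_parity H hk); case: (odd k); case: (b); case: (c).
Qed.

Lemma Veven_int (V : finType) (e : rel V) chi (H : hyps e chi) c :
  Veven e (interior e chi c) = interior e chi c :&: col chi c.
Proof.
apply/setP => v; rewrite /Veven.
have -> : v \in interior e chi c :&: col chi c = (v \in interior e chi c) && (chi v == false (+) c).
  by rewrite !inE.
rewrite -(Vpar H); rewrite !inE; congr (_ && _); apply: eq_existsb => k.
by case: (odd k).
Qed.

Lemma Vodd_int (V : finType) (e : rel V) chi (H : hyps e chi) c :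
  Vodd e (interior e chi c) = interior e chi c :&: col chi (~~ c).
Proof.
apply/setP => v; rewrite /Vodd.
have -> : v \in interior e chi c :&: col chi (~~ c) = (v \in interior e chi c) && (chi v == true (+) c).
  by rewrite !inE.
rewrite -(Vpar H); rewrite !inE; congr (_ && _); apply: eq_existsb => k.
by case: (odd k).
Qed.

Definition Pc (V : finType) (e : rel V) chi c (D : {set V}) :=
  (D \subset col chi c) && (col chi (~~ c) \subset nbrs e setT D).

Lemma nbrs_mono (V : finType) (e : rel V) (S D D' : {set V}) :
  D \subset D' -> nbrs e S D \subset nbrs e S D'.
Proof.
move=> sD; apply/subsetP => u /in_nbrs[v vD h]; apply/in_nbrs; exists v => //.
exact: (subsetP sD).
Qed.

Lemma nbr_col (V : finType) (e : rel V) chi (H : hyps e chi) c (D : {set V}) u :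
  chi u = ~~ c -> (u \in nbrs e setT D) = (u \in nbrs e setT (D :&: col chi c)).
Proof.
move=> cu; apply/idP/idP; last by apply: (subsetP (nbrs_mono _ _ _)); apply: subsetIl.
case/in_nbrs => v vD /andP[uT evu]; apply/in_nbrs; exists v; rewrite ?uT ?evu //.
rewrite !inE vD /=; move: cu; rewrite (colE H evu).
by case: (chi v); case: (c).
Qed.

Lemma TD_split (V : finType) (e : rel V) chi (H : hyps e chi) (D : {set V}) :
  TDset e D = Pc e chi true (D :&: col chi true) && Pc e chi false (D :&: col chi false).
Proof.
rewrite /TDset /Pc !subsetIr /=.
apply/eqP/andP => [h|[h1 h2]].
  split; apply/subsetP => u; rewrite inE => /eqP cu; rewrite -nbr_col ?h ?inE ?cu //.
apply/setP => u; rewrite in_setT; case cu: (chi u).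
  by rewrite (nbr_col H (c := false)) ?cu //; apply: (subsetP h2); rewrite inE cu.
by rewrite (nbr_col H (c := true)) ?cu //; apply: (subsetP h1); rewrite inE cu.
Qed.

Lemma setIcolU (V : finType) chi (D : {set V}) :
  D = (D :&: col chi true) :|: (D :&: col chi false).
Proof. by apply/setP => x; rewrite !inE; case: (chi x); rewrite ?andbT ?andbF ?orbF. Qed.

Lemma minTD (V : finType) (e : rel V) chi (H : hyps e chi) (D : {set V}) :
  minset (TDset e) D <->
  minset (Pc e chi true) (D :&: col chi true) /\ minset (Pc e chi false) (D :&: col chi false).
Proof.
have key : forall (A B : {set V}), A \subset col chi true -> B \subset col chi false ->
   (A :|: B) :&: col chi true = A /\ (A :|: B) :&: col chi false = B.
  move=> A B sA sB; split; apply/setP => x; rewrite !inE.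
    case xA: (x \in A); first by have := subsetP sA x xA; rewrite inE => ->.
    by case xB: (x \in B) => //=; have := subsetP sB x xB; rewrite inE => /eqP ->.
  case xB: (x \in B); first by have := subsetP sB x xB; rewrite inE orbT => ->.
  by case xA: (x \in A) => //=; have := subsetP sA x xA; rewrite inE => /eqP ->.
split.
  case/minsetP => TD minD; move: (TD); rewrite (TD_split H) => /andP[P1 P2].
  split; apply/minsetP; split => // B PB sB.
    have sBc : B \subset col chi true by case/andP: PB.
    have [k1 k2] := key B (D :&: col chi false) sBc (subsetIr _ _).
    have := minD (B :|: (D :&: col chi false)).
    rewrite (TD_split H) k1 k2 PB P2 => /(_ isT).
    have sub : B :|: D :&: col chi false \subset D.
      by rewrite {2}(setIcolU chi D); apply: setUSS; [exact: sB | exact: subxx].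
    by move=> /(_ sub) h; rewrite -{1}h k1.
  have sBc : B \subset col chi false by case/andP: PB.
  have [k1 k2] := key (D :&: col chi true) B (subsetIr _ _) sBc.
  have := minD ((D :&: col chi true) :|: B).
  rewrite (TD_split H) k1 k2 PB P1 => /(_ isT).
  have sub : D :&: col chi true :|: B \subset D.
    by rewrite {2}(setIcolU chi D); apply: setUSS; [exact: subxx | exact: sB].
  by move=> /(_ sub) h; rewrite -{1}h k2.
case=> /minsetP[P1 m1] /minsetP[P2 m2]; apply/minsetP; split.
  by rewrite (TD_split H) P1 P2.
move=> B; rewrite (TD_split H) => /andP[Q1 Q2] sB.
have e1 : B :&: col chi true = D :&: col chi true by apply: m1 Q1 _; apply: setSI.
have e2 : B :&: col chi false = D :&: col chi false by apply: m2 Q2 _; apply: setSI.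
by rewrite [LHS](setIcolU chi B) e1 e2 -setIcolU.
Qed.

Lemma Sup_col (V : finType) (e : rel V) chi c : Sup e chi c \subset col chi c.
Proof. exact: subsetIr. Qed.

Lemma Sup_notint (V : finType) (e : rel V) chi c x :
  x \in Sup e chi c -> x \notin interior e chi c.
Proof. by move=> xS; rewrite in_int xS. Qed.

Lemma Pc_Sup (V : finType) (e : rel V) chi (H : hyps e chi) c D :
  Pc e chi c D -> Sup e chi c \subset D.
Proof.
case/andP=> _ sN; apply/subsetP => s sS.
have [cs [l [esl hl]]] := Sup_leaf H sS.
have : l \in nbrs e setT D.
  apply: (subsetP sN); rewrite inE (colE H esl) cs.
  by case: (c).
case/in_nbrs => v vD /andP[_ evl].
by rewrite -(hl v) // (hsym H).
Qed.

Lemma Pc_decomp (V : finType) (e : rel V) chi (H : hyps e chi) c D :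
  Pc e chi c D -> D = Sup e chi c :|: (D :&: interior e chi c).
Proof.
move=> P; apply/setP => x; rewrite in_setU in_setI.
case xD: (x \in D) => /=; last first.
  by case xS: (x \in Sup e chi c) => //; rewrite -xD (subsetP (Pc_Sup H P)).
case xi: (x \in interior e chi c); first by rewrite orbT.
rewrite orbF; apply/esym; apply: (src_out H); last by rewrite xi.
by case/andP: P => /subsetP /(_ x xD); rewrite inE => /eqP.
Qed.

Lemma Q_equiv (V : finType) (e : rel V) chi (H : hyps e chi) c (D : {set V}) :
  D \subset interior e chi c ->
  (col chi (~~ c) \subset nbrs e setT (Sup e chi c :|: D)) =
  (Vodd e (interior e chi c) \subset nbrs e (interior e chi c) D).
Proof.
move=> sD; rewrite (Vodd_int H).
apply/subsetP/subsetP => h u.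
  rewrite inE => /andP[uI uc]; have := h u uc.
  case/in_nbrs => v; rewrite inE => /orP[vS|vD] /andP[_ evu].
    by move: uI; rewrite in_int => /andP[_ /negP[]]; apply/in_nbrs; exists v; rewrite // in_setT.
  by apply/in_nbrs; exists v; rewrite // uI.
rewrite inE => cu.
case: (boolP (u \in interior e chi c)) => uI.
  have : u \in nbrs e (interior e chi c) D by apply: h; rewrite inE uI inE cu.
  case/in_nbrs => v vD /andP[_ evu]; apply/in_nbrs; exists v; rewrite ?inE ?vD ?orbT //.
move: uI; rewrite in_int negb_and !negbK => /orP[uS|].
  by move: uS; rewrite in_Sup => /andP[_]; move: cu; case: (chi u); case: (c).
apply: (subsetP (nbrs_mono _ _ _)); exact: subsetUl.
Qed.

Lemma oddTD_col (V : finType) (e : rel V) chi (H : hyps e chi) c (D : {set V}) :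
  oddTDset e (interior e chi c) D -> oddTDset e (interior e chi c) (D :&: col chi c).
Proof.
case/andP=> sD sN; apply/andP; split; first by apply: subset_trans sD; apply: subsetIl.
apply/subsetP => u uo; have := subsetP sN u uo.
move: uo; rewrite (Vodd_int H) inE => /andP[uI]; rewrite inE => /eqP cu.
case/in_nbrs => v vD /andP[uI' evu]; apply/in_nbrs; exists v; rewrite ?uI' ?evu //.
rewrite inE vD inE; move: cu; rewrite (colE H evu).
by case: (chi v); case: (c).
Qed.

Lemma SupU_int (V : finType) (e : rel V) chi c (X : {set V}) :
  X \subset interior e chi c -> (Sup e chi c :|: X) :&: interior e chi c = X.
Proof.
move=> sX; apply/setP => x; rewrite in_setI in_setU.
case xX: (x \in X); first by rewrite orbT (subsetP sX).
rewrite orbF; case xS: (x \in Sup e chi c) => //=.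
by rewrite (negbTE (Sup_notint xS)).
Qed.

Lemma minPc_to (V : finType) (e : rel V) chi (H : hyps e chi) c D :
  minset (Pc e chi c) D -> minset (oddTDset e (interior e chi c)) (D :&: interior e chi c).
Proof.
case/minsetP => P minD.
have dec := Pc_decomp H P.
have sDc : D \subset col chi c by case/andP: P.
apply/minsetP; split.
  rewrite /oddTDset subsetIr /= -(Q_equiv H) ?subsetIr // -dec.
  by case/andP: P.
move=> B oB sB.
have oB' := oddTD_col H oB.
have sBi : B \subset interior e chi c by case/andP: oB.
have sB'i : B :&: col chi c \subset interior e chi c by apply: subset_trans sBi; apply: subsetIl.
have PB : Pc e chi c (Sup e chi c :|: (B :&: col chi c)).
  rewrite /Pc subUset Sup_col subsetIr /= (Q_equiv H) //.
  by case/andP: oB'.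
have sBD : Sup e chi c :|: (B :&: col chi c) \subset D.
  rewrite subUset (Pc_Sup H P) /=.
  apply: subset_trans (subsetIl _ _) _; apply: subset_trans sB _; exact: subsetIl.
have eqD := minD _ PB sBD.
have : B :&: col chi c = D :&: interior e chi c by rewrite -eqD SupU_int.
move=> h; apply/eqP; rewrite eqEsubset sB /= -h; exact: subsetIl.
Qed.

Lemma minPc_from (V : finType) (e : rel V) chi (H : hyps e chi) c D' :
  minset (oddTDset e (interior e chi c)) D' ->
  D' \subset col chi c /\ minset (Pc e chi c) (Sup e chi c :|: D').
Proof.
case/minsetP => oD minD'.
have sDi : D' \subset interior e chi c by case/andP: oD.
have eqc : D' :&: col chi c = D' by apply: minD' (oddTD_col H oD) (subsetIl _ _).
have sDc : D' \subset col chi c by rewrite -eqc subsetIr.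
split => //; apply/minsetP; split.
  rewrite /Pc subUset Sup_col sDc /= (Q_equiv H) //; by case/andP: oD.
move=> B PB sB.
have dec := Pc_decomp H PB.
have oB : oddTDset e (interior e chi c) (B :&: interior e chi c).
  rewrite /oddTDset subsetIr /= -(Q_equiv H) ?subsetIr // -dec.
  by case/andP: PB.
have sBD : B :&: interior e chi c \subset D'.
  apply/subsetP => x; rewrite in_setI => /andP[xB xi].
  have := subsetP sB x xB; rewrite in_setU => /orP[xS|//].
  by move: xi; rewrite (negbTE (Sup_notint xS)).
by rewrite dec (minD' _ oB sBD).
Qed.

Lemma keyU (V : finType) chi (A B : {set V}) : A \subset col chi true -> B \subset col chi false ->
   (A :|: B) :&: col chi true = A /\ (A :|: B) :&: col chi false = B.
Proof.
  move=> sA sB; split; apply/setP => x; rewrite !inE.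
    case xA: (x \in A); first by have := subsetP sA x xA; rewrite inE => ->.
    by case xB: (x \in B) => //=; have := subsetP sB x xB; rewrite inE => /eqP ->.
  case xB: (x \in B); first by have := subsetP sB x xB; rewrite inE orbT => ->.
  by case xA: (x \in A) => //=; have := subsetP sA x xA; rewrite inE => /eqP ->.
Qed.

Lemma face_part (V : finType) (e : rel V) chi (H : hyps e chi) c (D F : {set V}) :
  minset (Pc e chi c) (D :&: col chi c) -> F \subset ~: D ->
  F :&: col chi c \subset Veven e (interior e chi c) :\: ((D :&: col chi c) :&: interior e chi c).
Proof.
move=> mP sF; apply/subsetP => x; rewrite in_setI => /andP[xF xc].
have xD : x \notin D by have := subsetP sF x xF; rewrite inE.
rewrite (Veven_int H) in_setD !in_setI xc andbT.
rewrite (negbTE xD) andbT /=; apply/negP => /negP xi.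
have := src_out H _ xi; move: xc; rewrite inE => /eqP xc => /(_ xc) xS.
have := subsetP (Pc_Sup H (minsetp mP)) x xS; rewrite in_setI (negbTE xD) //.
Qed.

Lemma int_notSup (V : finType) (e : rel V) chi c x :
  x \in interior e chi c -> x \notin Sup e chi c.
Proof. by rewrite in_int => /andP[]. Qed.

Unset Implicit Arguments.

Theorem theorem4p9 (V : finType) (e : rel V) (chi : V -> bool) :
  symmetric e -> irreflexive e -> is_tree e -> 3 <= #|V| ->
  proper2coloring e chi ->
  stable_complex e =
  join (even_stable_complex e (interior e chi true))
       (even_stable_complex e (interior e chi false)).
Proof.
move=> hs hi ht hc hp; have H : hyps e chi by split.
apply/setP => F; rewrite /stable_complex /join inE.
apply/existsP/imset2P => [[D /andP[mD sF]]|[F1 F2 hF1 hF2 ->]].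
  have [mT mF] := (minTD H D).1 mD.
  exists (F :&: col chi true) (F :&: col chi false).
  - rewrite inE; apply/existsP; exists ((D :&: col chi true) :&: interior e chi true).
    by rewrite (minPc_to H mT) /= (face_part H mT sF).
  - rewrite inE; apply/existsP; exists ((D :&: col chi false) :&: interior e chi false).
    by rewrite (minPc_to H mF) /= (face_part H mF sF).
  - exact: setIcolU.
move: hF1 hF2; rewrite !inE => /existsP[D1 /andP[m1 s1]] /existsP[D2 /andP[m2 s2]].
have [c1 p1] := minPc_from H m1.
have [c2 p2] := minPc_from H m2.
set D := (Sup e chi true :|: D1) :|: (Sup e chi false :|: D2).
have u1 : Sup e chi true :|: D1 \subset col chi true by rewrite subUset Sup_col c1.
have u2 : Sup e chi false :|: D2 \subset col chi false by rewrite subUset Sup_col c2.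
have [k1 k2] := @keyU V chi (Sup e chi true :|: D1) (Sup e chi false :|: D2) u1 u2.
exists D; apply/andP; split.
  by apply/(minTD H); rewrite /D k1 k2.
apply/subsetP => x; rewrite in_setU inE => /orP[xF|xF].
  have := subsetP s1 x xF; rewrite (Veven_int H) in_setD in_setI => /and3P[xD1 xi xc].
  rewrite /D !in_setU (negbTE xD1) (negbTE (int_notSup xi)) /=.
  apply/negP => /orP[xS|xD2].
    by move: (subsetP (Sup_col e chi false) x xS); move: xc; rewrite !inE => /eqP ->.
  by move: (subsetP c2 x xD2); move: xc; rewrite !inE => /eqP ->.
have := subsetP s2 x xF; rewrite (Veven_int H) in_setD in_setI => /and3P[xD2 xi xc].
rewrite /D !in_setU (negbTE xD2) (negbTE (int_notSup xi)) /= orbF.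
apply/negP => /orP[xS|xD1].
  by move: (subsetP (Sup_col e chi true) x xS); move: xc; rewrite !inE => /eqP ->.
by move: (subsetP c1 x xD1); move: xc; rewrite !inE => /eqP ->.
Qed.
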